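(* Let $D_1,\dots,D_n$ be growing disks with centers $p_1,\dots,p_n\in\mathbb{R}^2$ and growth rates $v_1,\dots,v_n>0$, and let $t_1,\dots,t_n$ be their elimination times (with $t_1=\infty$). Let $i\in\{2,\dots,n\}$ and let \[ j^*=\operatorname{argmin}_{j=1,\dots,i-1}\{t(i,j)\mid t(i,j)\le t_j\}. \] Then $t_i=t(i,j^* )$, i.e., the disk $D_i$ is eliminated by the disk $D_{j^*}$.
   Context: Growing prioritized disks: at time $t\ge 0$ the disk $D_i$ is the closed disk centered at $p_i$ of radius $tv_i$. The index is the priority (smaller index = higher priority). For $i\ne j$, $t(i,j)=|p_ip_j|/(v_i+v_j)$ is the time at which $D_i$ and $D_j$ would touch. Whenever two disks $D_i,D_j$ with $i<j$ touch at time $t(i,j)$ and neither has been removed before that time, $D_j$ is removed at that time while $D_i$ keeps growing. The elimination time $t_i$ is the time at which $D_i$ is removed; $D_1$ is never removed, so $t_1=\infty$. General position is assumed: all times $t(i,j)$, $i\neq j$, are pairwise distinct. *)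

(* Defs.v *)
From HB Require Import structures.
From mathcomp Require Import all_boot all_order all_algebra.
Set Implicit Arguments. Unset Strict Implicit. Unset Printing Implicit Defensive.
Import Order.TTheory GRing.Theory Num.Theory.
Local Open Scope ring_scope.

(* Disks are indexed by 'I_n (0-based): index 0 is the paper's D_1, and the
   priority order is the order on indices (smaller index = higher priority). *)

Section GrowingDisks.
Variables (R : rcfType) (n : nat) (p : 'I_n -> R * R) (v : 'I_n -> R).

Definition dist (i j : 'I_n) : R :=
  Num.sqrt (((p i).1 - (p j).1) ^+ 2 + ((p i).2 - (p j).2) ^+ 2).

Definition touch_time (i j : 'I_n) : R := dist i j / (v i + v j).

(* Elimination times as extended reals: None = +infinity (never removed). *)
Definition ext_le (a : R) (b : option R) : bool :=
  if b is Some y then a <= y else true.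

Definition events : seq ('I_n * 'I_n) :=
  sort (fun e f => touch_time e.1 e.2 <= touch_time f.1 f.2)
       [seq e : 'I_n * 'I_n <- [seq (i, j) | i <- enum 'I_n, j <- enum 'I_n] | (e.1 < e.2)%N].

Definition step (T : 'I_n -> option R) (e : 'I_n * 'I_n) : 'I_n -> option R :=
  let: (i, j) := e in
  if (T i == None) && (T j == None) then
    fun k => if k == j then Some (touch_time i j) else T k
  else T.

Definition elim_time : 'I_n -> option R := foldl step (fun _ => None) events.

(* General position: the times t(i,j), i <> j, are pairwise distinct
   (as unordered pairs; note t(i,j) = t(j,i)). *)
Definition general_position : Prop :=
  forall i j k l : 'I_n, i != j -> k != l -> touch_time i j = touch_time k l ->
    (i = k /\ j = l) \/ (i = l /\ j = k).

End GrowingDisks.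

(* Main.v *)
Require Import Defs.
From HB Require Import structures.
From mathcomp Require Import all_boot all_order all_algebra.
Import Order.TTheory GRing.Theory Num.Theory.
Local Open Scope ring_scope.

Section Proofs.
Variables (R : rcfType) (n : nat) (p : 'I_n -> R * R) (v : 'I_n -> R).

Local Notation tt_ := (touch_time p v).
Local Notation s := (events p v).

Lemma tt_sym a b : tt_ a b = tt_ b a.
Proof.
rewrite /touch_time /dist (addrC (v a)).
have -> : ((p a).1 - (p b).1)^+2 = ((p b).1 - (p a).1)^+2 by rewrite -sqrrN opprB.
have -> : ((p a).2 - (p b).2)^+2 = ((p b).2 - (p a).2)^+2 by rewrite -sqrrN opprB.
by [].
Qed.

Definition st (m : nat) := foldl (@step R n p v) (fun _ => None) (take m s).

Lemma st0 : st 0 = fun _ => None. Proof. by rewrite /st take0. Qed.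

Lemma st_succ e0 m : (m < size s)%N -> st m.+1 = step p v (st m) (nth e0 s m).
Proof. by move=> hm; rewrite /st (take_nth e0 hm) foldl_rcons. Qed.

Lemma st_over m : (size s <= m)%N -> st m = elim_time p v.
Proof. by move=> hm; rewrite /st take_oversize. Qed.

Lemma step_some T e k y : T k = Some y -> step p v T e k = Some y.
Proof.
case: e => a b /= hk; case: ifP => // /andP [_ /eqP hb].
by case: eqP => [hkb|//]; rewrite hkb hb in hk.
Qed.

Lemma step_none T e k y : T k = None -> step p v T e k = Some y ->
  [/\ e.2 = k, T e.1 = None & y = tt_ e.1 e.2].
Proof.
case: e => a b /= hk; case: ifP => [/andP [/eqP ha /eqP hb]|_]; last by rewrite hk.
by case: eqP => [hkb [<-]|_]; [split | rewrite hk].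
Qed.

Arguments step_some {T e k y}.
Arguments step_none {T e k y}.

Lemma st_S_some m k y : st m k = Some y -> st m.+1 k = Some y.
Proof.
case: (ltnP m (size s)) => hm.
  have e0 : 'I_n * 'I_n by move: hm; case: (events p v) => // e _; exact e.
  by rewrite (st_succ e0 _ hm) => /step_some; apply.
by rewrite !st_over // ltnW.
Qed.

Arguments st_S_some {m k y}.

Lemma st_persist m m' k y : (m <= m')%N -> st m k = Some y -> st m' k = Some y.
Proof.
move=> /subnK <-; elim: (m' - m)%N => [//|d IH] h.
by rewrite addSn; apply: st_S_some; apply: IH.
Qed.
Arguments st_persist {m m' k y}.

Lemma st_origin e0 m k y : st m k = Some y -> exists m'', [/\ (m'' < m)%N,
  (m'' < size s)%N, (nth e0 s m'').2 = k,
  st m'' (nth e0 s m'').1 = None & st m'' k = None] /\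
  (st m''.+1 k = Some y /\ y = tt_ (nth e0 s m'').1 (nth e0 s m'').2).
Proof.
elim: m => [|m IH]; first by rewrite st0.
case hk: (st m k) => [y'|] h.
  have := st_S_some hk; rewrite h => -[hyy]; subst y'.
  case: (IH hk) => m'' [[a1 a2 a3 a4 a5] [a6 a7]]; exists m''.
  by split; split => //; apply: ltnW.
case: (ltnP m (size s)) => hm; last first.
  by move: h; rewrite (st_over _ (leqW hm)) -(st_over _ hm) hk.
move: h; rewrite (st_succ e0 _ hm) => h.
case: (step_none hk h) => h2 h1 hy.
by exists m; split; split => //; rewrite (st_succ e0 _ hm).
Qed.


Lemma mem_events a b : ((a, b) \in s) = (a < b)%N.
Proof.
rewrite /events mem_sort mem_filter /=; case: ltnP => //= _.
by apply: (allpairs_f (fun i j => (i, j))); rewrite mem_enum.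
Qed.

Lemma events_lt e : e \in s -> (e.1 < e.2)%N.
Proof. by case: e => a b; rewrite mem_events. Qed.
Arguments events_lt {e}.

Lemma uniq_events : uniq s.
Proof.
rewrite sort_uniq filter_uniq // allpairs_uniq ?enum_uniq //.
by move=> [a b] [c d] _ _ /= ->.
Qed.

Lemma time_le e0 m1 m2 : (m1 <= m2)%N -> (m2 < size s)%N ->
  tt_ (nth e0 s m1).1 (nth e0 s m1).2 <= tt_ (nth e0 s m2).1 (nth e0 s m2).2.
Proof.
move=> h12 h2.
have srt : sorted (fun e f => tt_ e.1 e.2 <= tt_ f.1 f.2) s.
  by apply: sort_sorted => e f; apply: le_total.
have tr : transitive (fun e f : 'I_n * 'I_n => tt_ e.1 e.2 <= tt_ f.1 f.2).
  by move=> x y z; apply: le_trans.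
have rf : reflexive (fun e f : 'I_n * 'I_n => tt_ e.1 e.2 <= tt_ f.1 f.2).
  by move=> x; apply: lexx.
have := sorted_leq_nth tr rf e0 srt; apply.
- by rewrite inE (leq_ltn_trans h12 h2).
- by rewrite inE.
- by [].
Qed.

Lemma time_lt e0 (gp : general_position p v) m1 m2 : (m1 < m2)%N -> (m2 < size s)%N ->
  tt_ (nth e0 s m1).1 (nth e0 s m1).2 < tt_ (nth e0 s m2).1 (nth e0 s m2).2.
Proof.
move=> h12 h2; have h1 : (m1 < size s)%N by apply: ltn_trans h12 h2.
rewrite lt_neqAle (time_le _ _ _ (ltnW h12) h2) andbT; apply/eqP => heq.
have l1 := events_lt (mem_nth e0 h1); have l2 := events_lt (mem_nth e0 h2).
have n1 : (nth e0 s m1).1 != (nth e0 s m1).2 by rewrite neq_ltn l1.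
have n2 : (nth e0 s m2).1 != (nth e0 s m2).2 by rewrite neq_ltn l2.
case: (gp _ _ _ _ n1 n2 heq) => [[ha hb]|[ha hb]].
  have : nth e0 s m1 == nth e0 s m2.
    by move: ha hb; case: (nth e0 s m1) => ? ?; case: (nth e0 s m2) => ? ? /= -> ->.
  by rewrite nth_uniq ?uniq_events // => /eqP ee; rewrite ee ltnn in h12.
by move: l1; rewrite ha hb => /(ltn_trans l2); rewrite ltnn.
Qed.

Arguments st_origin e0 {m k y}.
Arguments time_lt e0 gp m1 m2 : clear implicits.

Lemma main_aux (hgp : general_position p v)
  (i : 'I_n) (jstar : 'I_n)
  (hj_lt : (jstar < i)%N)
  (hj_adm : ext_le (tt_ i jstar) (elim_time p v jstar))
  (hj_min : forall j : 'I_n, (j < i)%N ->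
              ext_le (tt_ i j) (elim_time p v j) ->
              tt_ i jstar <= tt_ i j) :
  elim_time p v i = Some (tt_ i jstar).
Proof.
have hmem : (jstar, i) \in s by rewrite mem_events.
have hmi : (index (jstar, i) s < size s)%N by rewrite index_mem.
have hnth : nth (i, i) s (index (jstar, i) s) = (jstar, i) by apply: nth_index.
move: hmi hnth; move: (index (jstar, i) s) => mi hmi hnth.
have Ti : tt_ (nth (i, i) s mi).1 (nth (i, i) s mi).2 = tt_ i jstar by rewrite hnth tt_sym.
have Ni : st mi i = None.
  case hs: (st mi i) => [y|] //.
  case: (st_origin (i, i) hs) => m [[hm hms hk hk1 hki] [hS hy]].
  have lk : ((nth (i, i) s m).1 < i)%N.
    by have := events_lt (mem_nth (i, i) hms); rewrite hk.
  have tlt := time_lt (i, i) hgp _ _ hm hmi; rewrite Ti in tlt.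
  have tik : tt_ i (nth (i, i) s m).1 = tt_ (nth (i, i) s m).1 (nth (i, i) s m).2.
    by rewrite hk tt_sym.
  have adm : ext_le (tt_ i (nth (i, i) s m).1) (elim_time p v (nth (i, i) s m).1).
    rewrite /ext_le; case he: (elim_time p v _) => [y'|] //.
    move: he; rewrite -(st_over (size s) (leqnn _)) => he.
    case: (st_origin (i, i) he) => m3 [[_ hm3s hk3 _ hk3n] [hS3 hy3]].
    have lt3 : (m < m3)%N.
      rewrite ltnNge leq_eqVlt; apply/negP => /orP [/eqP e|lt].
        by move: hk3; rewrite e hk => ki; rewrite -ki ltnn in lk.
      by have := st_persist lt hS3; rewrite hk1.
    by rewrite hy3 tik; apply: ltW; exact: time_lt (i, i) hgp _ _ lt3 hm3s.
  have := hj_min _ lk adm; rewrite tik => hle.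
  by have := lt_le_trans tlt hle; rewrite ltxx.
have Nj : st mi jstar = None.
  case hs: (st mi jstar) => [y|] //.
  case: (st_origin (i, i) hs) => m [[hm hms hk hk1 hki] [hS hy]].
  have he : elim_time p v jstar = Some y.
    rewrite -(st_over (size s) (leqnn _)); apply: st_persist hS.
    exact: leq_trans hm (ltnW hmi).
  move: hj_adm; rewrite he /ext_le hy => hle.
  have tlt := time_lt (i, i) hgp _ _ hm hmi; rewrite Ti in tlt.
  by have := lt_le_trans tlt hle; rewrite ltxx.
have h1 : st mi.+1 i = Some (tt_ i jstar).
  by rewrite (st_succ (i, i) _ hmi) hnth /= Ni Nj eqxx /= eqxx tt_sym.
rewrite -(st_over (size s) (leqnn _)); exact: st_persist hmi h1.
Qed.

End Proofs.

Theorem lemma1 (R : rcfType) (n : nat) (p : 'I_n -> R * R) (v : 'I_n -> R)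
  (hv : forall k, 0 < v k) (hgp : general_position p v)
  (i : 'I_n) (hi : (0 < i)%N) (jstar : 'I_n)
  (hj_lt : (jstar < i)%N)
  (hj_adm : ext_le (touch_time p v i jstar) (elim_time p v jstar))
  (hj_min : forall j : 'I_n, (j < i)%N ->
              ext_le (touch_time p v i j) (elim_time p v j) ->
              touch_time p v i jstar <= touch_time p v i j) :
  elim_time p v i = Some (touch_time p v i jstar).
Proof. exact: main_aux. Qed.
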